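(* Let $S\in\{0,1\}$ be an endogenous binary selection indicator (with $S=1$ meaning the unit is included and its label $Y$ observed), let $Z\subseteq V$ be a set of endogenous variables, and let $(d,\theta)$, $(d',\theta')$ be values of the inputs. Suppose $Y\perp\!\!\!\perp\{D,\Theta,S\}\mid X,Z$ and $\mathbb{P}(X,Z\mid\mathrm{do}(D=d,\Theta=\theta))\ll\mathbb{P}(X,Z\mid S=1,\mathrm{do}(D=d',\Theta=\theta'))$. Then $\mathbb{E}[Y\mid X,\mathrm{do}(D=d,\Theta=\theta)]$ is identifiable in $\mathcal{M}$ from $\{\mathbb{P}(X,Y,Z\mid S=1,\mathrm{do}(D=d',\Theta=\theta')),\ \mathbb{P}(X,Z\mid\mathrm{do}(D=d,\Theta=\theta))\}$, and $$\mathbb{E}[Y\mid X,\mathrm{do}(D=d,\Theta=\theta)]=\mathbb{E}\big[\mathbb{E}[Y\mid X,Z,S=1]\,\big|\,X,\mathrm{do}(D=d,\Theta=\theta)\big]$$ holds $\mathbb{P}(X\mid\mathrm{do}(D=d,\Theta=\theta))$-almost everywhere.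
   Context: Setting: all variables take values in subsets of Euclidean spaces with Borel $\sigma$-algebras. Variables: features $X$, target $Y$ (real-valued), prediction $\hat{Y}$, and two input (non-random, externally set) variables: a domain indicator $D\in\{0,1\}$ (deployment of a decision support system) and parameters $\Theta$. A structural causal model (SCM) with input variables $\{D,\Theta\}$ induces, for every value $(d,\theta)$, a distribution $\mathbb{P}(\cdot\mid\mathrm{do}(D=d,\Theta=\theta))$ on the endogenous variables (push-forward of independent exogenous distributions through the structural equations). The class $\mathcal{M}$: the set of SCMs with endogenous variables $V\supseteq\{X,\hat{Y},Y\}$, input variables $\{D,\Theta\}$, and graph $G$ such that the parents of $\hat{Y}$ are exactly $\{X,\Theta\}$, the children of $D$ equal the children of $\hat{Y}$, and the latent projection of $G$ onto $\{X,\hat{Y},Y,D,\Theta\}$ is a subgraph of the acyclic directed mixed graph with edges $X\to\hat{Y}$, $\Theta\to\hat{Y}$, $X\to Y$, $\hat{Y}\to Y$, $D\to Y$, $X\leftrightarrow Y$. Identifiability: a target quantity $t(M)$ is identifiable in $\mathcal{M}$ from a set $s(M)$ of distributions induced by $M$ if $s(M_1)=s(M_2)\implies t(M_1)=t(M_2)$ for all $M_1,M_2\in\mathcal{M}$. The conditional independence $Y\perp\!\!\!\perp\{D,\Theta,S\}\mid X,Z$ is meant in the transitional sense (implied by d-separation in the graph). $\ll$ denotes absolute continuity. *)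

(* Defs.v *)
From HB Require Import structures.
From mathcomp Require Import all_boot all_order all_algebra.
From mathcomp Require Import all_classical all_reals all_analysis.

Unset Strict Implicit.
Unset Printing Implicit Defensive.

Import Order.TTheory GRing.Theory Num.Theory.
Local Open Scope classical_set_scope.
Local Open Scope ring_scope.

(* Euclidean encoding.  The endogenous variables of an SCM are indexed by a  *)
(* finite type V; the joint state of all endogenous variables is a point of  *)
(* R^N (an N.-tuple), each coordinate i : 'I_N belonging to the variable     *)
(* own i.  The value of a set A of variables is represented by the tuple in  *)
(* which all coordinates not belonging to A are set to 0 (this is a          *)
(* measurable embedding of the product of the value spaces of A into R^N).   *)

Definition coord_restr (R : realType) (I : finType) (n : nat) (own : 'I_n -> I)
  (A : {set I}) (x : n.-tuple R) : n.-tuple R :=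
  [tuple if own i \in A then tnth x i else 0 | i < n].

Definition zero_tuple (R : realType) (n : nat) : n.-tuple R :=
  [tuple (0 : R) | i < n].

(* Acyclic SCMs with input variables D (domain indicator, in {0,1} = bool)   *)
(* and Theta (parameters, in R^p).  Exogenous variables are indexed by a     *)
(* finite type [exo]; jointly they live in R^nE, coordinate k belonging to   *)
(* exogenous variable ownE k, and are mutually independent under PE.        *)
(* The graph of the SCM: paV w v (w -> v), paD v (D -> v), paT v (Theta ->   *)
(* v), paE u v (exogenous u -> v).  Shared exogenous parents induce the      *)
(* bidirected edges of the (mixed) graph of the SCM.                         *)

Record SCM (R : realType) (V : finType) (N : nat) (own : 'I_N -> V)
    (p : nat) := {
  exo : finType;
  nE : nat;
  ownE : 'I_nE -> exo;
  PE : probability (nE.-tuple R) R;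
  F : N.-tuple R -> bool -> p.-tuple R -> nE.-tuple R -> N.-tuple R;
  paV : V -> V -> bool;
  paD : V -> bool;
  paT : V -> bool;
  paE : exo -> V -> bool;
  F_local : forall (i : 'I_N) x x' d d' th th' e e',
    (forall j, paV (own j) (own i) -> tnth x j = tnth x' j) ->
    (paD (own i) -> d = d') ->
    (paT (own i) -> th = th') ->
    (forall k, paE (ownE k) (own i) -> tnth e k = tnth e' k) ->
    tnth (F x d th e) i = tnth (F x' d' th' e') i;
  F_meas : forall d th,
    measurable_fun [set: N.-tuple R * nE.-tuple R]
      (fun xe => F xe.1 d th xe.2);
  acyclic : exists rk : V -> nat, forall w v, paV w v -> (rk w < rk v)%N;
  exo_indep : forall A : exo -> set (nE.-tuple R),
    (forall u, measurable (A u)) ->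
    PE (\bigcap_u (@coord_restr R exo nE ownE [set u] @^-1` A u)) =
    (\prod_u PE (@coord_restr R exo nE ownE [set u] @^-1` A u))%E
}.


Arguments exo {R V N own p} _.
Arguments nE {R V N own p} _.
Arguments ownE {R V N own p} _ _.
Arguments PE {R V N own p} _.
Arguments F {R V N own p} _ _ _ _ _.
Arguments paV {R V N own p} _ _ _.
Arguments paD {R V N own p} _ _.
Arguments paT {R V N own p} _ _.
Arguments paE {R V N own p} _ _ _.

Section SCMdefs.
Context (R : realType) (V : finType) (N : nat) (own : 'I_N -> V) (p : nat).
Implicit Type M : @SCM R V N own p.

(* The (unique, by acyclicity) solution of the structural equations:        *)
(* #|V| rounds of substitution suffice since every directed chain of         *)
(* endogenous variables has at most #|V| nodes.                              *)
Definition scm_sol M (d : bool) (th : p.-tuple R) (e : (nE M).-tuple R) :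
  N.-tuple R := iter #|V| (fun x => F M x d th e) (zero_tuple R N).

Definition Pdo M (d : bool) (th : p.-tuple R) : set (N.-tuple R) -> \bar R :=
  pushforward (PE M) (scm_sol M d th).

Definition vals (A : {set V}) : N.-tuple R -> N.-tuple R := @coord_restr R V N own A.

(* scm_node: inl true = D, inl false = Theta, inr (inl v) = endogenous v,       *)
(*       inr (inr u) = exogenous (latent) u                                  *)
Definition scm_node M := (bool + (V + exo M))%type.

Definition gedge M : rel (scm_node M) := fun a b =>
  match a, b with
  | inl true, inr (inl v) => paD M v
  | inl false, inr (inl v) => paT M v
  | inr (inl w), inr (inl v) => paV M w v
  | inr (inr u), inr (inl v) => paE M u v
  | _, _ => false
  end.

(* Latent projection of the graph onto the scm_node set W: *)
Definition lp_dir M (W : seq (scm_node M)) (a b : scm_node M) : Prop :=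
  exists s, path (gedge M) a (rcons s b) && all (fun c => c \notin W) s.
(* a <-> b iff a path a <- ... <- c -> ... -> b with c and all intermediate *)
(* nodes outside W (i.e. all intermediate nodes latent non-colliders).      *)
Definition lp_bidir M (W : seq (scm_node M)) (a b : scm_node M) : Prop :=
  a != b /\ exists c, c \notin W /\ exists s1 s2,
    [&& path (gedge M) c (rcons s1 a), all (fun c => c \notin W) s1,
        path (gedge M) c (rcons s2 b) & all (fun c => c \notin W) s2].

Definition in_classM M (vX vYh vY : V) : Prop :=
  let nD : scm_node M := inl true in
  let nT : scm_node M := inl false in
  let nX : scm_node M := inr (inl vX) in
  let nYh : scm_node M := inr (inl vYh) in
  let nY : scm_node M := inr (inl vY) in
  let W := [:: nX; nYh; nY; nD; nT] in
  [/\ (forall w, paV M w vYh = (w == vX)) /\ ~~ paD M vYh /\ paT M vYh,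
      (forall v, paD M v = paV M vYh v),
      (forall a b, a \in W -> b \in W -> lp_dir M W a b ->
         (a, b) \in [:: (nX, nYh); (nT, nYh); (nX, nY); (nYh, nY); (nD, nY)])
    &
      (forall a b, a \in W -> b \in W -> lp_bidir M W a b ->
         ((a, b) == (nX, nY)) || ((a, b) == (nY, nX)))].

End SCMdefs.

Arguments scm_sol {R V N own p} M d th e.
Arguments Pdo {R V N own p} M d th.
Arguments vals {R V N} own A x.
Arguments scm_node {R V N own p} M.
Arguments gedge {R V N own p} M _ _.
Arguments lp_dir {R V N own p} M W a b.
Arguments lp_bidir {R V N own p} M W a b.
Arguments in_classM {R V N own p} M vX vYh vY.

Definition condP d (T : measurableType d) (R : realType)
  (P : set T -> \bar R) (C : set T) : set T -> \bar R :=
  fun A => (P (A `&` C) * ((fine (P C))^-1)%:E)%E.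

Definition is_condexp d1 d2 (T1 : measurableType d1) (T2 : measurableType d2)
  (R : realType) (mu : set T1 -> \bar R) (g : T1 -> T2) (Yf : T1 -> R)
  (h : T2 -> R) : Prop :=
  measurable_fun [set: T2] h /\
  forall B : set T2, measurable B ->
    (\int[mu]_(x in g @^-1` B) (Yf x)%:E =
     \int[mu]_(x in g @^-1` B) (h (g x))%:E)%E.

(* Transitional conditional independence  Yf _||_ {D, Theta} u Ind | Cond  *)
(* (Forré): there is a Markov kernel Q from (the value of) Cond to Yf such  *)
(* that for all input values (d, th),                                       *)
(*   P(Cond u Ind, Yf | do(d, th)) = P(Cond u Ind | do(d, th)) (x) Q.       *)
Definition trans_CI (R : realType) (V : finType) (N : nat) (own : 'I_N -> V)
  (p : nat) (M : @SCM R V N own p) (Yf : N.-tuple R -> R)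
  (Ind Cond : {set V}) : Prop :=
  exists Q : R.-pker (N.-tuple R) ~> R,
    forall d th (C : set (N.-tuple R)) (E : set R),
      measurable C -> measurable E ->
      Pdo M d th (vals own (Cond :|: Ind) @^-1` C `&` Yf @^-1` E) =
      (\int[Pdo M d th]_(x in vals own (Cond :|: Ind) @^-1` C)
          Q (vals own Cond x) E)%E.

Arguments coord_restr {R I n} own A x.
Arguments condP {d T R} P C.
Arguments is_condexp {d1 d2 T1 T2 R} mu g Yf h.
Arguments trans_CI {R V N own p} M Yf Ind Cond.

(* Main.v *)
Require Import Defs.
From HB Require Import structures.
From mathcomp Require Import all_boot all_order all_algebra.
From mathcomp Require Import all_classical all_reals all_analysis.
From mathcomp Require Import measurable_realfun.

Import Order.TTheory GRing.Theory Num.Theory.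
Local Open Scope classical_set_scope.
Local Open Scope ring_scope.



Section basics.
Context (R : realType).

Lemma meas_coord_restr (I : finType) (n : nat) (own : 'I_n -> I) (A : {set I}) :
  measurable_fun [set: n.-tuple R] (coord_restr own A).
Proof.
apply/measurable_fun_tnthP => i /=.
rewrite /comp /coord_restr.
have -> : (fun x : n.-tuple R => tnth [tuple (if own i0 \in A then tnth x i0 else 0) | i0 < n] i)
   = (fun x => if own i \in A then tnth x i else 0).
  by apply/funext => x; rewrite tnth_mktuple.
case: (own i \in A); [exact: measurable_tnth | exact: measurable_cst].
Qed.

Lemma coord_restrK (I : finType) (n : nat) (own : 'I_n -> I) (A B : {set I}) (x : n.-tuple R) :
  coord_restr own A (coord_restr own B x) = coord_restr own (A :&: B) x.
Proof.
apply: eq_from_tnth => i; rewrite /coord_restr !tnth_mktuple inE.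
by case: (own i \in A); case: (own i \in B).
Qed.

Lemma tnth_coord_restr (I : finType) (n : nat) (own : 'I_n -> I) (A : {set I}) (x : n.-tuple R) i :
  own i \in A -> tnth (coord_restr own A x) i = tnth x i.
Proof. by move=> h; rewrite /coord_restr tnth_mktuple h. Qed.

End basics.



Section pdo.
Context (R : realType) (V : finType) (N : nat) (own : 'I_N -> V) (p : nat).
Variable M : @SCM R V N own p.

Lemma meas_scm_sol d th : measurable_fun [set: (nE M).-tuple R] (scm_sol M d th).
Proof.
rewrite /scm_sol; elim: #|V| => [|n IH] /=; first exact: measurable_cst.
have -> : (fun e => F M (iter n (fun x => F M x d th e) (zero_tuple R N)) d th e) =
  (fun xe : N.-tuple R * (nE M).-tuple R => F M xe.1 d th xe.2) \o
  (fun e => (iter n (fun x => F M x d th e) (zero_tuple R N), e)) by [].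
apply: measurableT_comp; first exact: F_meas.
exact: measurable_fun_pair.
Qed.

Section inst.
Variables (d : bool) (th : p.-tuple R).
Local Open Scope ereal_scope.

Let pdo0 : Pdo M d th set0 = 0.
Proof. by rewrite /Pdo /pushforward preimage_set0 measure0. Qed.

Let pdo_ge0 A : 0 <= Pdo M d th A.
Proof. by rewrite /Pdo /pushforward; apply: measure_ge0. Qed.

Let pdo_sigma_additive : semi_sigma_additive (Pdo M d th).
Proof.
move=> F mF tF mUF; rewrite /Pdo /pushforward preimage_bigcup.
have mf := meas_scm_sol d th.
apply: measure_semi_sigma_additive.
- by move=> n; rewrite -[X in measurable X]setTI; exact: mf.
- apply/trivIsetP => /= i j _ _ ij; rewrite -preimage_setI.
  by move/trivIsetP : tF => /(_ _ _ _ _ ij) ->//; rewrite preimage_set0.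
- by rewrite -preimage_bigcup -[X in measurable X]setTI; exact: mf.
Qed.

HB.instance Definition _ := isMeasure.Build _ _ _
  (Pdo M d th) pdo0 pdo_ge0 pdo_sigma_additive.

Let pdo_setT : Pdo M d th setT = 1.
Proof. by rewrite /Pdo /pushforward preimage_setT probability_setT. Qed.

HB.instance Definition _ := Measure_isProbability.Build _ _ _ (Pdo M d th) pdo_setT.

End inst.
End pdo.

Definition condPm d (T : measurableType d) (R : realType)
  (P : {measure set T -> \bar R}) (C : set T) (mC : measurable C) :=
  condP P C.
Arguments condPm {d T R} P {C} mC.

Section condp.
Context d (T : measurableType d) (R : realType).
Local Open Scope ereal_scope.


Variables (P : {measure set T -> \bar R}) (C : set T) (mC : measurable C).

Lemma condP_c_ge0 : (0 <= (fine (P C))^-1)%R.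
Proof. by rewrite invr_ge0 fine_ge0 // measure_ge0. Qed.

Lemma condPmE : condPm P mC = mscale (NngNum condP_c_ge0) (mrestr P mC).
Proof. by apply/funext => A; rewrite /condPm /condP /mscale /mrestr /= muleC. Qed.

Let c0 : condPm P mC set0 = 0.
Proof. by rewrite condPmE measure0. Qed.
Let c_ge0 A : 0 <= condPm P mC A.
Proof. by rewrite condPmE measure_ge0. Qed.
Let c_sa : semi_sigma_additive (condPm P mC).
Proof. rewrite condPmE; exact: measure_semi_sigma_additive. Qed.

HB.instance Definition _ := isMeasure.Build _ _ _ (condPm P mC) c0 c_ge0 c_sa.

End condp.

Definition pfw d1 d2 (T1 : measurableType d1) (T2 : measurableType d2) (R : realType)
  (mu : {measure set T1 -> \bar R}) (f : T1 -> T2)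
  (mf : measurable_fun setT f) := pushforward mu f.
Arguments pfw {d1 d2 T1 T2 R} mu {f} mf.

Section pfw.
Context d1 d2 (T1 : measurableType d1) (T2 : measurableType d2) (R : realType).
Local Open Scope ereal_scope.
Variables (mu : {measure set T1 -> \bar R}) (f : T1 -> T2) (mf : measurable_fun setT f).
Let p0 : pfw mu mf set0 = 0.
Proof. by rewrite /pfw /pushforward preimage_set0 measure0. Qed.
Let p_ge0 A : 0 <= pfw mu mf A.
Proof. by rewrite /pfw /pushforward; apply: measure_ge0. Qed.
Let p_sa : semi_sigma_additive (pfw mu mf).
Proof.
move=> F mF tF mUF; rewrite /pfw /pushforward preimage_bigcup.
apply: measure_semi_sigma_additive.
- by move=> n; rewrite -[X in measurable X]setTI; exact: mf.
- apply/trivIsetP => /= i j _ _ ij; rewrite -preimage_setI.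
  by move/trivIsetP : tF => /(_ _ _ _ _ ij) ->//; rewrite preimage_set0.
- by rewrite -preimage_bigcup -[X in measurable X]setTI; exact: mf.
Qed.
HB.instance Definition _ := isMeasure.Build _ _ _ (pfw mu mf) p0 p_ge0 p_sa.
End pfw.



Section iint.
Context d1 d2 (T : measurableType d1) (U : measurableType d2) (R : realType).
Local Open Scope ereal_scope.
Import HBNNSimple.

Lemma iint_nnsfun (mu : {measure set T -> \bar R}) (A : set T) (mA : measurable A)
  (q : T -> {measure set U -> \bar R})
  (mq : forall E, measurable E -> measurable_fun [set: T] (q ^~ E))
  (h : {nnsfun U >-> R}) :
  \int[mu]_(x in A) \int[q x]_y (h y)%:E =
  \sum_(r \in range h) r%:E * \int[mu]_(x in A) q x (h @^-1` [set r]).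
Proof.
under eq_integral do rewrite integralT_nnsfun sintegralE.
rewrite ge0_integral_fsum//; last 2 first.
  - move=> r; apply: measurable_funeM.
    exact: measurable_funTS (mq _ _).
  - move=> n y _.
    have := @mulemu_ge0 _ _ _ (q y) n (fun n => h @^-1` [set n]).
    by apply; exact: preimage_nnfun0.
apply: eq_fsbigr => r _.
have [r0|r0] := leP 0%R r.
  rewrite ge0_integralZl//.
  exact: measurable_funTS (mq _ _).
rewrite preimage_nnfun0//.
rewrite [LHS]integral0_eq; last by move=> x _; rewrite measure0 mule0.
by rewrite integral0_eq ?mule0// => x _; exact: measure0.
Qed.

Lemma iint_eq (mu1 mu2 : {measure set T -> \bar R}) (A1 A2 : set T)
  (mA1 : measurable A1) (mA2 : measurable A2)
  (q1 q2 : T -> {measure set U -> \bar R})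
  (mq1 : forall E, measurable E -> measurable_fun [set: T] (q1 ^~ E))
  (mq2 : forall E, measurable E -> measurable_fun [set: T] (q2 ^~ E)) :
  (forall E, measurable E ->
     \int[mu1]_(x in A1) q1 x E = \int[mu2]_(x in A2) q2 x E) ->
  forall f : U -> \bar R, (forall y, 0 <= f y) -> measurable_fun [set: U] f ->
  \int[mu1]_(x in A1) \int[q1 x]_y f y = \int[mu2]_(x in A2) \int[q2 x]_y f y.
Proof.
move=> Hq f f0 mf.
pose f_ := nnsfun_approx measurableT mf.
have key (mu : {measure set T -> \bar R}) (A : set T) (mA : measurable A)
    (q : T -> {measure set U -> \bar R})
    (mq : forall E, measurable E -> measurable_fun [set: T] (q ^~ E)) :
    \int[mu]_(x in A) \int[q x]_y f y =
    limn (fun n => \int[mu]_(x in A) \int[q x]_y (f_ n y)%:E).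
  transitivity (\int[mu]_(x in A) limn (fun n => \int[q x]_y (f_ n y)%:E)).
    apply: eq_integral => x _.
    rewrite -monotone_convergence//; last 3 first.
    - by move=> n; exact/measurable_EFinP.
    - by move=> n z _; rewrite lee_fin.
    - by move=> z _ a b ab; rewrite lee_fin; exact/lefP/nd_nnsfun_approx.
    apply: eq_integral => z _; apply/esym/cvg_lim => //.
    exact: cvg_nnsfun_approx.
  rewrite monotone_convergence//.
  - move=> n; apply: measurable_funTS.
    apply: measurable_fun_integral_kernel => //.
    + by move=> z; rewrite lee_fin.
    + exact/measurable_EFinP.
  - by move=> n y _; apply: integral_ge0 => // z _; rewrite lee_fin.
  - move=> y _ a b ab; apply: ge0_le_integral => //.
    + by move=> z _; rewrite lee_fin.
    + exact/measurable_EFinP.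
    + exact/measurable_EFinP.
    + by move=> z _; rewrite lee_fin; exact/lefP/nd_nnsfun_approx.
rewrite (key _ _ mA1 _ mq1) (key _ _ mA2 _ mq2).
have -> : (fun n => \int[mu1]_(x in A1) \int[q1 x]_y (f_ n y)%:E) =
  (fun n => \int[mu2]_(x in A2) \int[q2 x]_y (f_ n y)%:E); last by [].
apply/funext => n; rewrite !iint_nnsfun//.
apply: eq_fsbigr => r _; congr (_ * _).
by rewrite Hq.
Qed.

End iint.



Section tools.
Local Open Scope ereal_scope.

Lemma int_pfw d1 d2 (T1 : measurableType d1) (T2 : measurableType d2) (R : realType)
  (mu : {measure set T1 -> \bar R}) (g : T1 -> T2) (mg : measurable_fun setT g)
  (f : T2 -> \bar R) (mf : measurable_fun setT f) (B : set T2) (mB : measurable B) :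
  \int[pfw mu mg]_(y in B) f y = \int[mu]_(x in g @^-1` B) f (g x).
Proof.
rewrite [LHS]integralE [RHS]integralE.
rewrite /pfw (@ge0_integral_pushforward _ _ _ _ _ g mg mu B (f^\+)) //; last first.
  exact/measurable_funepos/measurable_funTS.
rewrite (@ge0_integral_pushforward _ _ _ _ _ g mg mu B (f^\-)) //; last first.
  exact/measurable_funeneg/measurable_funTS.
by rewrite -funepos_comp -funeneg_comp.
Qed.
Arguments int_pfw {d1 d2 T1 T2 R} mu {g} mg {f} mf {B} mB.

Lemma uniq_pf d1 d2 (T1 : measurableType d1) (T2 : measurableType d2) (R : realType)
  (mu : {measure set T1 -> \bar R}) (g : T1 -> T2) (mg : measurable_fun setT g)
  (u v : T2 -> R) (mu_ : measurable_fun setT u) (mv : measurable_fun setT v) :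
  \int[mu]_(x in g @^-1` setT) (u (g x))%:E \is a fin_num ->
  (forall B, measurable B -> \int[mu]_(x in g @^-1` B) (u (g x))%:E =
                           \int[mu]_(x in g @^-1` B) (v (g x))%:E) ->
  (pushforward mu g).-negligible [set y | u y <> v y].
Proof.
move=> fin H.
have mu' : measurable_fun setT (EFin \o u) by exact/measurable_EFinP.
have mv' : measurable_fun setT (EFin \o v) by exact/measurable_EFinP.
have ui : (pfw mu mg).-integrable setT (EFin \o u).
  apply/integrableP; split; first exact: mu'.
  apply/(abse_integralP _ measurableT mu').
  by rewrite (int_pfw _ _ mu' measurableT) -fin_num_abs; exact: fin.
have := @integral_ae_eq _ _ _ (pfw mu mg) setT measurableT (EFin \o v) (EFin \o u) ui mv'.
case.
  by move=> E _ mE; rewrite (int_pfw _ _ mu' mE) (int_pfw _ _ mv' mE); exact: H.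
move=> N [mN N0 sN]; exists N; split => //.
move=> y /= uv; apply: sN => /=; apply/not_implyP; split => //.
by move=> [].
Qed.

Lemma int_mrestr d (T : measurableType d) (R : realType)
  (P : {measure set T -> \bar R}) (C : set T) (mC : measurable C)
  (D : set T) (mD : measurable D) (f : T -> \bar R) :
  (forall x, 0 <= f x) -> measurable_fun setT f ->
  \int[mrestr P mC]_(x in D) f x = \int[P]_(x in D `&` C) f x.
Proof.
move=> f0 mf.
have mdir (E : set T) : measurable E -> measurable_fun [set: T] (fun x => (\d_x E : \bar R)).
  move=> mE; rewrite (_ : (fun x => _) = (fun x => (\1_E x)%:E)); last first.
    by apply/funext => x; rewrite diracE indicE.
  by apply/measurable_EFinP; exact: measurable_indic.
have dd (mu : {measure set T -> \bar R}) A : \int[mu]_(x in A) \int[\d_x]_y f y = \int[mu]_(x in A) f x.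
  by apply: eq_integral => x _; rewrite integral_dirac// diracT mul1e.
rewrite -(dd (mrestr P mC) D) -(dd P (D `&` C)).
apply: (@iint_eq _ _ T T R (mrestr P mC) P D (D `&` C) mD (measurableI _ _ mD mC)
  (fun x => \d_x) (fun x => \d_x) (fun E mE => mdir E mE) (fun E mE => mdir E mE)) => //.
move=> E mE /=.
have ee (x : T) : (\d_x E : \bar R) = (\1_E x)%:E by rewrite diracE indicE.
rewrite (eq_integral (fun x => (\1_E x)%:E)); last by move=> x _; exact: ee.
rewrite [RHS](eq_integral (fun x => (\1_E x)%:E)); last by move=> x _; exact: ee.
rewrite !integral_indic//; last exact: measurableI.
by rewrite /mrestr setIA.
Qed.

End tools.



Section tools2.
Local Open Scope ereal_scope.
Context d (T : measurableType d) (R : realType).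

Lemma int_condPm (P : {measure set T -> \bar R}) (C : set T) (mC : measurable C)
  (D : set T) (mD : measurable D) (f : T -> \bar R) :
  (forall x, 0 <= f x) -> measurable_fun setT f ->
  \int[condPm P mC]_(x in D) f x =
  ((fine (P C))^-1)%:E * \int[P]_(x in D `&` C) f x.
Proof.
move=> f0 mf.
rewrite condPmE ge0_integral_mscale//; last exact: measurable_funTS.
by rewrite int_mrestr.
Qed.

Lemma kint (nu : {measure set T -> \bar R}) (A : set T) (mA : measurable A)
  (Yf : T -> R) (mY : measurable_fun setT Yf)
  (q : T -> {measure set R -> \bar R})
  (mq : forall E, measurable E -> measurable_fun [set: T] (q ^~ E)) :
  (forall E, measurable E -> nu (A `&` Yf @^-1` E) = \int[nu]_(x in A) q x E) ->
  forall f : R -> \bar R, (forall y, 0 <= f y) -> measurable_fun setT f ->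
  \int[nu]_(x in A) f (Yf x) = \int[nu]_(x in A) \int[q x]_y f y.
Proof.
move=> H f f0 mf.
have mdir (E : set R) : measurable E ->
    measurable_fun [set: T] (fun x => (\d_(Yf x) E : \bar R)).
  move=> mE; rewrite (_ : (fun x => _) = (fun x => (\1_(Yf @^-1` E) x)%:E)); last first.
    by apply/funext => x; rewrite diracE indicE.
  apply/measurable_EFinP; apply: measurable_indic.
  by rewrite -[X in measurable X]setTI; exact: mY.
have -> : \int[nu]_(x in A) f (Yf x) = \int[nu]_(x in A) \int[\d_(Yf x)]_y f y.
  by apply: eq_integral => x _; rewrite integral_dirac// diracT mul1e.
apply: (@iint_eq _ _ T R R nu nu A A mA mA (fun x => \d_(Yf x)) q
   (fun E mE => mdir E mE) mq) => // E mE /=.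
have ee (x : T) : (\d_(Yf x) E : \bar R) = (\1_(Yf @^-1` E) x)%:E
  by rewrite diracE indicE.
rewrite (eq_integral (fun x => (\1_(Yf @^-1` E) x)%:E)); last by move=> x _; exact: ee.
rewrite integral_indic//; last by rewrite -[X in measurable X]setTI; exact: mY.
by rewrite setIC H.
Qed.

Definition fpos : R -> \bar R := (@EFin R)^\+.
Definition fneg : R -> \bar R := (@EFin R)^\-.

Lemma mfpos : measurable_fun setT fpos.
Proof. by rewrite /fpos; apply: measurable_funepos; exact: EFin_measurable. Qed.
Lemma mfneg : measurable_fun setT fneg.
Proof. by rewrite /fneg; apply: measurable_funeneg; exact: EFin_measurable. Qed.

Definition kmean (q : T -> {measure set R -> \bar R}) (x : T) : R :=
  (fine (\int[q x]_y fpos y) - fine (\int[q x]_y fneg y))%R.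

Lemma mean_eq (nu : {measure set T -> \bar R}) (A : set T) (mA : measurable A)
  (Yf : T -> R) (mY : measurable_fun setT Yf)
  (q : T -> {measure set R -> \bar R})
  (mq : forall E, measurable E -> measurable_fun [set: T] (q ^~ E)) :
  (forall E, measurable E -> nu (A `&` Yf @^-1` E) = \int[nu]_(x in A) q x E) ->
  nu.-integrable A (EFin \o Yf) ->
  nu.-integrable A (EFin \o kmean q) /\
  \int[nu]_(x in A) (Yf x)%:E = \int[nu]_(x in A) (kmean q x)%:E.
Proof.
move=> HCI Yint.
have part (f : R -> \bar R) (f0 : forall y, 0 <= f y) (mf : measurable_fun setT f) :
    \int[nu]_(x in A) f (Yf x) < +oo ->
    let phi := fun x => \int[q x]_y f y in
    [/\ nu.-integrable A (EFin \o fine \o phi),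
        \int[nu]_(x in A) (fine (phi x))%:E = \int[nu]_(x in A) phi x &
        \int[nu]_(x in A) f (Yf x) = \int[nu]_(x in A) phi x].
  move=> flt phi.
  have eq1 : \int[nu]_(x in A) f (Yf x) = \int[nu]_(x in A) phi x.
    exact: (@kint nu A mA Yf mY q mq HCI f f0 mf).
  have mphi : measurable_fun setT phi.
    by apply: measurable_fun_integral_kernel => //; exact: mq.
  have phi0 x : 0 <= phi x by apply: integral_ge0 => y _.
  have phiint : nu.-integrable A phi.
    apply/integrableP; split; first exact: measurable_funTS.
    under eq_integral do rewrite gee0_abs//.
    by rewrite -eq1.
  have mfphi : measurable_fun setT (EFin \o fine \o phi).
    apply/measurable_EFinP; apply: measurableT_comp => //.
  have ae : ae_eq nu A (EFin \o fine \o phi) phi.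
    have := integrable_ae mA phiint.
    apply: filterS => x + Ax => /(_ Ax) fx.
    by rewrite /= fineK.
  have eq2 : \int[nu]_(x in A) (fine (phi x))%:E = \int[nu]_(x in A) phi x.
    apply: ae_eq_integral => //; exact: measurable_funTS.
  split => //.
  apply/integrableP; split; first exact: measurable_funTS.
  under eq_integral do rewrite gee0_abs ?lee_fin ?fine_ge0//.
  by rewrite eq2 -eq1.
have Hp : \int[nu]_(x in A) fpos (Yf x) < +oo.
  have := integral_funepos_lt_pinfty mA Yint.
  by rewrite funepos_comp.
have Hn : \int[nu]_(x in A) fneg (Yf x) < +oo.
  have := integral_funeneg_lt_pinfty mA Yint.
  by rewrite funeneg_comp.
have [ip e2p e1p] := part fpos (fun y => funepos_ge0 _ y) mfpos Hp.
have [in_ e2n e1n] := part fneg (fun y => funeneg_ge0 _ y) mfneg Hn.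
set phip := (fun x => \int[q x]_y fpos y).
set phin := (fun x => \int[q x]_y fneg y).
have ekm : EFin \o kmean q = (EFin \o fine \o phip) \- (EFin \o fine \o phin).
  by apply/funext => x.
split; first by rewrite ekm; apply: integrableB.
rewrite [RHS](eq_integral ((EFin \o fine \o phip) \- (EFin \o fine \o phin))); last first.
  by move=> x _.
rewrite integralB// e2p e2n -e1p -e1n.
rewrite [LHS]integralE.
by rewrite funepos_comp funeneg_comp.
Qed.

End tools2.



Section model.
Context (R : realType) (V : finType) (N : nat) (own : 'I_N -> V) (p : nat).
Variables (vX vY vS : V) (Z : {set V}) (iY iS : 'I_N).
Hypotheses (hY : own iY = vY) (hS : own iS = vS).
Local Open Scope ereal_scope.

Local Notation T := (N.-tuple R).
Local Notation XZ := (vX |: Z).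
Local Notation XZS := ((vX |: Z) :|: [set vS]).
Local Notation Yf := (fun x : N.-tuple R => tnth x iY).
Local Notation S1 := [set x : N.-tuple R | tnth x iS = 1%R].
Local Notation vals A := (@coord_restr R V N own A).

Lemma mYf : measurable_fun setT Yf.
Proof. exact: measurable_tnth. Qed.

Lemma mS1 : measurable S1.
Proof.
rewrite -[X in measurable X]setTI.
exact: (measurable_tnth iS measurableT (measurable_set1 1%R)).
Qed.

Lemma mvals A : measurable_fun setT (vals A).
Proof. exact: meas_coord_restr. Qed.

Definition CIhyp (M : @SCM R V N own p) (Q : R.-pker (N.-tuple R) ~> R) :=
  forall d th (C : set T) (E : set R),
      measurable C -> measurable E ->
      Pdo M d th (vals XZS @^-1` C `&` Yf @^-1` E) =
      (\int[Pdo M d th]_(x in vals XZS @^-1` C) Q (vals XZ x) E)%E.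

Variables (M : @SCM R V N own p) (Q : R.-pker (N.-tuple R) ~> R).
Hypothesis HQ : CIhyp M Q.

Let q := fun x : T => (Q (vals XZ x) : {measure set R -> \bar R}).

Lemma mq E : measurable E -> measurable_fun [set: T] (q ^~ E).
Proof.
move=> mE; exact: (measurableT_comp (measurable_kernel Q E mE) (mvals XZ)).
Qed.

Definition mt : T -> R := @kmean _ _ R (fun z : T => (Q z : {measure set R -> \bar R})).

Lemma mmt : measurable_fun setT mt.
Proof.
rewrite /mt /kmean; apply: measurable_funB.
- apply: measurableT_comp; first exact: (@fine_measurable R setT measurableT).
  apply: measurable_fun_integral_kernel => //.
  + by move=> U mU; exact: measurable_kernel.
  + by move=> z; exact: funepos_ge0.
  + exact: mfpos.
- apply: measurableT_comp; first exact: (@fine_measurable R setT measurableT).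
  apply: measurable_fun_integral_kernel => //.
  + by move=> U mU; exact: measurable_kernel.
  + by move=> z; exact: funeneg_ge0.
  + exact: mfneg.
Qed.

Lemma kmeanE x : @kmean _ _ R q x = mt (vals XZ x).
Proof. by []. Qed.


Lemma valsK (A B : {set V}) (x : T) : A \subset B -> vals A (vals B x) = vals A x.
Proof. by move=> AB; rewrite coord_restrK (finset.setIidPl AB). Qed.

Lemma mpre (A : {set V}) (C : set T) : measurable C -> measurable (vals A @^-1` C).
Proof. by move=> mC; rewrite -[X in measurable X]setTI; exact: mvals. Qed.

Lemma CI_cond d' th' (C : set T) (mC : measurable C) (E : set R) (mE : measurable E) :
  condPm (Pdo M d' th') mS1 (vals XZ @^-1` C `&` Yf @^-1` E) =
  \int[condPm (Pdo M d' th') mS1]_(x in vals XZ @^-1` C) q x E.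
Proof.
rewrite (@int_condPm _ _ R (Pdo M d' th') S1 mS1 _ (mpre XZ C mC) (q ^~ E)); last 2 first.
  - by move=> x; exact: measure_ge0.
  - exact: mq.
rewrite /condPm /condP muleC; congr (_ * _).
have eqC : vals XZ @^-1` C `&` S1 = vals XZS @^-1` (vals XZ @^-1` C `&` S1).
  apply/seteqP; split => x /=.
  - rewrite valsK; last exact: finset.subsetUl.
    by rewrite tnth_coord_restr // hS !inE eqxx orbT.
  - rewrite valsK; last exact: finset.subsetUl.
    by rewrite tnth_coord_restr // hS !inE eqxx orbT.
rewrite eqC -HQ //; last by apply: measurableI => //; [exact: mpre | exact: mS1].
by rewrite -eqC setIAC.
Qed.

Lemma mt_condexp d' th' :
  (condP (Pdo M d' th') S1).-integrable setT (EFin \o Yf) ->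
  is_condexp (condP (Pdo M d' th') S1) (vals XZ) Yf mt.
Proof.
move=> Yint; split; first exact: mmt.
move=> C mC.
have := @mean_eq _ _ R (condPm (Pdo M d' th') mS1) (vals XZ @^-1` C) (mpre XZ C mC)
  Yf mYf q mq (@CI_cond d' th' C mC).
case.
  apply: (@integrableS _ _ _ (condPm (Pdo M d' th') mS1) setT) => //.
  exact: mpre.
by move=> _ ->.
Qed.


Lemma keyM d th d' th' :
  (Pdo M d th).-integrable setT (EFin \o Yf) ->
  (condP (Pdo M d' th') S1).-integrable setT (EFin \o Yf) ->
  (forall A, measurable A -> pushforward (condP (Pdo M d' th') S1) (vals XZ) A = 0 ->
     pushforward (Pdo M d th) (vals XZ) A = 0) ->
  forall h, is_condexp (condP (Pdo M d' th') S1) (vals XZ) Yf h ->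
  forall B, measurable B ->
    \int[Pdo M d th]_(x in vals [set vX] @^-1` B) (Yf x)%:E =
    \int[Pdo M d th]_(x in vals [set vX] @^-1` B) (h (vals XZ x))%:E.
Proof.
move=> Yint Yintc hac h [mh hh] B mB.
have [_ ct] := @mt_condexp d' th' Yintc.
have neg : (pushforward (condP (Pdo M d' th') S1) (vals XZ)).-negligible
    [set z | mt z <> h z].
  apply: (@uniq_pf _ _ _ _ R (condPm (Pdo M d' th') mS1) _ (mvals XZ) mt h mmt mh).
    have := ct _ measurableT; rewrite preimage_setT => <-.
    exact: (@integrable_fin_num _ _ R (condPm (Pdo M d' th') mS1) setT measurableT).
  by move=> C mC; have := ct _ mC; rewrite (hh _ mC) => <-.
case: neg => Nn [mN N0 sub].
have N0' := hac _ mN N0.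
have ae : ae_eq (Pdo M d th) setT (fun x => (h (vals XZ x))%:E)
    (fun x => (mt (vals XZ x))%:E).
  exists (vals XZ @^-1` Nn); split => //; first exact: mpre.
  move=> x /= hx; apply: sub => /= hmt; apply: hx => _.
  by rewrite hmt.
have eqA : vals [set vX] @^-1` B = vals XZS @^-1` (vals [set vX] @^-1` B).
  have sX : ([set vX]%SET : {set V}) \subset XZS by rewrite finset.sub1set !inE eqxx.
  by apply/seteqP; split => x /=; rewrite valsK.
have mA : measurable (vals [set vX] @^-1` B) by exact: mpre.
have := @mean_eq _ _ R (Pdo M d th) (vals [set vX] @^-1` B) mA Yf mYf q mq.
case.
- move=> E mE; rewrite [in LHS]eqA [in RHS]eqA.
  exact: (HQ d th _ _ (mpre _ _ mB) mE).
- exact: (@integrableS _ _ _ (Pdo M d th) setT).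
move=> _ ->.
apply/esym/ae_eq_integral => //.
- apply/measurable_EFinP; apply: measurable_funTS.
  first [exact: (measurableT_comp mh (mvals XZ)) | exact: (measurableT_comp mmt (mvals XZ))].
- apply/measurable_EFinP; apply: measurable_funTS.
  first [exact: (measurableT_comp mh (mvals XZ)) | exact: (measurableT_comp mmt (mvals XZ))].
- by apply: filterS ae => x + _; apply.
Qed.

End model.





Lemma transfer d1 d2 (T1 : measurableType d1) (T2 : measurableType d2) (R : realType)
  (mu1 mu2 : {measure set T1 -> \bar R}) (g : T1 -> T2) (mg : measurable_fun setT g)
  (F : T2 -> \bar R) (mF : measurable_fun setT F) (B : set T2) (mB : measurable B) :
  (forall A, measurable A -> mu1 (g @^-1` A) = mu2 (g @^-1` A)) ->
  (\int[mu1]_(x in g @^-1` B) F (g x) = \int[mu2]_(x in g @^-1` B) F (g x))%E.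
Proof.
move=> H.
rewrite -(@int_pfw _ _ _ _ _ mu1 g mg F mF B mB) -(@int_pfw _ _ _ _ _ mu2 g mg F mF B mB).
by apply: eq_measure_integral => A mA _; exact: H.
Qed.

Theorem mainTheorem5
  (R : realType) (V : finType) (N : nat) (own : 'I_N -> V) (p : nat)
  (vX vYh vY vS : V) (Z : {set V}) (iY iS : 'I_N)
  (d d' : bool) (th th' : p.-tuple R) :
  (* X, Yhat, Y are three distinct endogenous variables *)
  uniq [:: vX; vYh; vY] ->
  (* Y is real-valued: it consists of the single coordinate iY *)
  own iY = vY -> (forall i, own i = vY -> i = iY) ->
  (* S is one-dimensional: the single coordinate iS *)
  own iS = vS -> (forall i, own i = vS -> i = iS) ->
  let Y : N.-tuple R -> R := fun x => tnth x iY in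
  let S1 : set (N.-tuple R) := [set x | tnth x iS = 1] in
  let XZ := vX |: Z in
  let XYZ := vX |: (vY |: Z) in
  (* P(X, Z | do(D=d, Theta=th)) *)
  let PXZ_do (M : SCM R V N own p) := pushforward (Pdo M d th) (vals own XZ) in
  (* P(X, Z | S = 1, do(D=d', Theta=th')) *)
  let PXZ_S1 (M : SCM R V N own p) := pushforward (condP (Pdo M d' th') S1) (vals own XZ) in
  (* P(X, Y, Z | S = 1, do(D=d', Theta=th')) *)
  let PXYZ_S1 (M : SCM R V N own p) := pushforward (condP (Pdo M d' th') S1) (vals own XYZ) in
  (* P(X | do(D=d, Theta=th)) *)
  let PX_do (M : SCM R V N own p) := pushforward (Pdo M d th) (vals own [set vX]) in
  (* the standing hypotheses on a model M *)
  let Hyp (M : SCM R V N own p) :=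
    [/\ in_classM M vX vYh vY,
        (* S is a binary indicator *)
        (forall d0 th0 e, tnth (scm_sol M d0 th0 e) iS = 0 \/
                          tnth (scm_sol M d0 th0 e) iS = 1),
        (* Y _||_ {D, Theta, S} | X, Z  (transitional) *)
        trans_CI M Y [set vS] XZ,
        (* P(X,Z | do(d,th)) << P(X,Z | S=1, do(d',th')) *)
        (forall A, measurable A -> PXZ_S1 M A = 0%E -> PXZ_do M A = 0%E)
      & (* the conditioning and the expectations are well defined *)
        [/\ (0 < Pdo M d' th' S1)%E,
            (Pdo M d th).-integrable [set: N.-tuple R] (fun x => (Y x)%:E)
          & (condP (Pdo M d' th') S1).-integrable [set: N.-tuple R]
              (fun x => (Y x)%:E)]] in
  (* identifiability of E[Y | X, do(d,th)] from
     {P(X,Y,Z | S=1, do(d',th')), P(X,Z | do(d,th))} *)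
  (forall M1 M2 : SCM R V N own p, Hyp M1 -> Hyp M2 ->
     (forall A, measurable A ->
        PXYZ_S1 M1 A = PXYZ_S1 M2 A /\ PXZ_do M1 A = PXZ_do M2 A) ->
     forall g1 g2,
       is_condexp (Pdo M1 d th) (vals own [set vX]) Y g1 ->
       is_condexp (Pdo M2 d th) (vals own [set vX]) Y g2 ->
       (PX_do M1).-negligible [set x | g1 x <> g2 x]) /\
  (* E[Y | X, do(d,th)] = E[ E[Y | X, Z, S=1] | X, do(d,th)]
     P(X | do(d,th))-a.e. *)
  (forall M : SCM R V N own p, Hyp M ->
     forall g h k,
       is_condexp (Pdo M d th) (vals own [set vX]) Y g ->
       is_condexp (condP (Pdo M d' th') S1) (vals own XZ) Y h ->
       is_condexp (Pdo M d th) (vals own [set vX])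
                  (fun x => h (vals own XZ x)) k ->
       (PX_do M).-negligible [set x | g x <> k x]).

Proof.
move=> huniq hY hYu hS hSu Y S1 XZ XYZ PXZ_do PXZ_S1 PXYZ_S1 PX_do Hyp.
have mS : measurable S1 := @mS1 R N iS.
have mv (A : {set V}) : measurable_fun setT (vals own A) := @meas_coord_restr R V N own A.
have mpr (A : {set V}) (C : set (N.-tuple R)) : measurable C -> measurable (vals own A @^-1` C).
  by move=> mC; rewrite -[X in measurable X]setTI; exact: mv.
have mYY : measurable_fun setT Y by exact: measurable_tnth.
have tY x : Y x = Y (vals own XYZ x).
  by rewrite /Y /vals tnth_coord_restr // hY !inE eqxx !orbT.
have sXZ : XZ \subset XYZ.
  apply/fintype.subsetP => v; rewrite !inE.
  by case/orP => ->; rewrite ?orbT.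
have tXZ x : vals own XZ (vals own XYZ x) = vals own XZ x.
  by rewrite /vals coord_restrK (finset.setIidPl sXZ).
have sX : ([set vX]%SET : {set V}) \subset XZ by rewrite finset.sub1set !inE eqxx.
have tX x : vals own [set vX] (vals own XZ x) = vals own [set vX] x.
  by rewrite /vals coord_restrK (finset.setIidPl sX).
have preXZ C : vals own XZ @^-1` C = vals own XYZ @^-1` (vals own XZ @^-1` C).
  by apply/seteqP; split => x /=; rewrite tXZ.
have preX B : vals own [set vX] @^-1` B = vals own XZ @^-1` (vals own [set vX] @^-1` B).
  by apply/seteqP; split => x /=; rewrite tX.
split.
  move=> M1 M2 [_ _ [Q1 HQ1] hac1 [pos1 Yint1 Yintc1]]
    [_ _ [Q2 HQ2] hac2 [pos2 Yint2 Yintc2]] Heq g1 g2 [mg1 hg1] [mg2 hg2].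
  pose h := @mt R N Q1.
  have hc1 := @mt_condexp R V N own p vX vS Z iY iS hS M1 Q1 HQ1 d' th' Yintc1.
  have trc (F : N.-tuple R -> \bar R) (mF : measurable_fun setT F) C (mC : measurable C) :
      (\int[condPm (Pdo M1 d' th') mS]_(x in vals own XZ @^-1` C) F (vals own XYZ x) =
      \int[condPm (Pdo M2 d' th') mS]_(x in vals own XZ @^-1` C) F (vals own XYZ x))%E.
    rewrite preXZ.
    apply: (@transfer _ _ _ _ R (condPm (Pdo M1 d' th') mS) (condPm (Pdo M2 d' th') mS)
      _ (mv XYZ) F mF _ (mpr XZ C mC)).
    by move=> A mA; have [] := Heq A mA.
  have mh : measurable_fun setT h by exact: mmt.
  have hc2 : is_condexp (condP (Pdo M2 d' th') S1) (vals own XZ) Y h.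
    split => // C mC.
    have e1 (mu : {measure set (N.-tuple R) -> \bar R}) :
        (\int[mu]_(x in vals own XZ @^-1` C) (Y x)%:E =
         \int[mu]_(x in vals own XZ @^-1` C) (EFin \o Y) (vals own XYZ x))%E.
      by apply: eq_integral => x _; rewrite /= -tY.
    have e2 (mu : {measure set (N.-tuple R) -> \bar R}) :
        (\int[mu]_(x in vals own XZ @^-1` C) (h (vals own XZ x))%:E =
         \int[mu]_(x in vals own XZ @^-1` C)
            (EFin \o h \o vals own XZ) (vals own XYZ x))%E.
      by apply: eq_integral => x _; rewrite /= tXZ.
    have mF1 : measurable_fun setT (EFin \o Y) by exact/measurable_EFinP.
    have mF2 : measurable_fun setT (EFin \o h \o vals own XZ).
      by apply/measurable_EFinP; exact: measurableT_comp.
    change ((\int[condPm (Pdo M2 d' th') mS]_(x in vals own XZ @^-1` C) (Y x)%:E =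
      \int[condPm (Pdo M2 d' th') mS]_(x in vals own XZ @^-1` C) (h (vals own XZ x))%:E)%E).
    rewrite e1 e2 -(trc _ mF1 _ mC) -(trc _ mF2 _ mC) -e1 -e2.
    exact: hc1.2.
  have key1 := @keyM R V N own p vX vS Z iY iS hS M1 Q1 HQ1 d th d' th' Yint1 Yintc1 hac1 h hc1.
  have key2 := @keyM R V N own p vX vS Z iY iS hS M2 Q2 HQ2 d th d' th' Yint2 Yintc2 hac2 h hc2.
  have trd (F : N.-tuple R -> \bar R) (mF : measurable_fun setT F) B (mB : measurable B) :
      (\int[Pdo M1 d th]_(x in vals own [set vX] @^-1` B) F (vals own XZ x) =
      \int[Pdo M2 d th]_(x in vals own [set vX] @^-1` B) F (vals own XZ x))%E.
    rewrite preX.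
    apply: (@transfer _ _ _ _ R (Pdo M1 d th) (Pdo M2 d th)
      _ (mv XZ) F mF _ (mpr [set vX]%SET B mB)).
    by move=> A mA; have [] := Heq A mA.
  apply: (@uniq_pf _ _ _ _ R (Pdo M1 d th) (vals own [set vX])
    (mv [set vX]%SET) g1 g2 mg1 mg2).
    rewrite -(hg1 _ measurableT) preimage_setT.
    exact: (@integrable_fin_num _ _ R (Pdo M1 d th) setT measurableT).
  move=> B mB.
  have mF3 : measurable_fun setT (EFin \o h) by exact/measurable_EFinP.
  have mF4 : measurable_fun setT (EFin \o g2 \o vals own [set vX]).
    by apply/measurable_EFinP; exact: measurableT_comp.
  have e3 (mu : {measure set (N.-tuple R) -> \bar R}) :
      (\int[mu]_(x in vals own [set vX] @^-1` B) (g2 (vals own [set vX] x))%:E =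
       \int[mu]_(x in vals own [set vX] @^-1` B)
          (EFin \o g2 \o vals own [set vX]) (vals own XZ x))%E.
    by apply: eq_integral => x _; rewrite /= tX.
  rewrite -(hg1 _ mB) (key1 _ mB).
  rewrite (trd _ mF3 _ mB) -(key2 _ mB) (hg2 _ mB).
  by rewrite e3 -(trd _ mF4 _ mB) -e3.
move=> M [_ _ [Q HQ] hac [pos Yint Yintc]] g h k [mg hg] hh [mk hk].
have key := @keyM R V N own p vX vS Z iY iS hS M Q HQ d th d' th' Yint Yintc hac h hh.
apply: (@uniq_pf _ _ _ _ R (Pdo M d th) (vals own [set vX])
  (@meas_coord_restr R V N own [set vX]) g k mg mk).
  rewrite -(hg _ measurableT) preimage_setT.
  exact: (@integrable_fin_num _ _ R (Pdo M d th) setT measurableT).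
by move=> B mB; rewrite -(hg _ mB) (key _ mB) (hk _ mB).
Qed.
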